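(* Let $1\le i,j\le d$ with $i\ne j$ and $m,n\in\mathbb Z_{<0}$. Then the vertex operator of $v^{ij}(m,n)\mathbf 1\in V_{\mathcal J}=M_r$ is $$Y(v^{ij}(m,n)\mathbf 1,z)=(-1)^{-m-n}\sum_{l\in\mathbb Z}\Big\{\sum_{k\in\mathbb Z}\binom{l+n-k}{-m-1}\binom{k-n-1}{-n-1}v^{ij}(l+m+n+1-k,k)\Big\}z^{-l-1}.$$
   Context: Fix an integer $d\ge 2$ and $r\in\mathbb{C}$. Let $\hat{\mathfrak h}$ be the complex Lie algebra with basis $\{v^i(m)\mid 1\le i\le d,\ m\in\mathbb{Z}\}\cup\{\mathbf c\}$ and bracket $[v^i(m),v^j(n)]=\delta_{m+n,0}\delta_{i,j}\,m\,\mathbf c$, $[\mathbf c,\hat{\mathfrak h}]=0$. In $A=U(\hat{\mathfrak h})/\langle \mathbf c-1\rangle$ let $v^{ij}(m,n)$ be the image of $v^i(m)v^j(n)$; then $v^{ij}(m,n)=v^{ji}(n,m)$ unless $i=j$ and $m=-n$, and $v^{ii}(m,-m)=v^{ii}(-m,m)+m$. Let $\mathcal B=\{v^{ii}(m,n)\mid 1\le i\le d,\ m\le n\}\cup\{v^{ij}(m,n)\mid 1\le i<j\le d,\ m,n\in\mathbb Z\}$; then $\mathcal B\cup\{1\}$ is linearly independent, $\mathcal L:=\mathrm{span}_{\mathbb C}\mathcal B\oplus\mathbb C\subset A$ contains every $v^{ij}(m,n)$ and is closed under $[x,y]=xy-yx$. With $\pi_1,\pi_2$ the projections of $\mathcal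 L$ onto $\mathrm{span}\,\mathcal B$ and onto $\mathbb C$, $[x,y]_r=\pi_1([x,y])+r\pi_2([x,y])$ is a Lie bracket on $\mathcal L$; call this Lie algebra $\mathcal L_r$. Let $\mathcal B_+=\{v^{ij}(m,n)\in\mathcal B\mid m\ge 0\text{ or }n\ge 0\}$, $\mathcal B_-=\{v^{ij}(m,n)\in\mathcal B\mid m,n<0\}$, $\mathcal L_r^+=\mathrm{span}\,\mathcal B_+\oplus\mathbb C$, and $M_r=U(\mathcal L_r)\otimes_{U(\mathcal L_r^+)}\mathbb C\mathbf 1$, where $\mathcal B_+$ acts by $0$ on $\mathbf 1$ and $s\in\mathbb C\subset\mathcal L_r$ acts by the scalar $s$; $M_r$ is graded by giving $x_p\cdots x_1\mathbf 1$ with $x_q=v^{i_qj_q}(m_q,n_q)\in\mathcal B_-$ degree $-\sum_q(m_q+n_q)$. Define operators on $M_r$: $L_r^{ij}(m)=\frac12\sum_{h\in\mathbb Z}v^{ij}(m-h,h)$ if $i\ne j$ or $m\ne0$, and $L_r^{ii}(0)=\frac12 v^{ii}(0,0)+\sum_{h>0}v^{ii}(-h,h)$. Let $\omega_r^{ij}=L_r^{ij}(-2)\mathbf 1$, $\omega=\sum_i\omega_r^{ii}$, and $V_{\mathcal J}\subset M_r$ the span of all $L_r^{i_1j_1}(m_1)\cdots L_r^{i_pj_p}(m_p)\mathbf 1$; it is known that $V_{\mathcal J}=M_r$. By a theorem of Ashihara–Miyamoto, there is a unique linear map $Y(\cdot,z):V_{\mathcal J}\to\mathrm{End}(V_{\mathcal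 J})[[z,z^{-1}]]$ with $Y(\omega_r^{ij},z)=\sum_m L_r^{ij}(m)z^{-m-2}$ and $Y(\mathbf 1,z)=\mathrm{Id}$ making $(V_{\mathcal J},Y,\mathbf 1,\omega)$ a vertex operator algebra of central charge $dr$. Binomial coefficients are $\binom{a}{b}=a(a-1)\cdots(a-b+1)/b!$ for $a\in\mathbb Z$, $b\in\mathbb Z_{\ge0}$. The inner sums act on $M_r$ as operators (only finitely many terms are nonzero on each vector). *)

(* Defs.v *)
From HB Require Import structures.
From mathcomp Require Import all_boot all_order all_algebra.
From mathcomp Require Import complex.
From mathcomp Require Import reals.
Set Implicit Arguments. Unset Strict Implicit. Unset Printing Implicit Defensive.
Import Order.TTheory GRing.Theory Num.Theory.
Local Open Scope ring_scope.

Section Defs.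
Variable C : fieldType.

Definition binz (a : int) (b : nat) : C :=
  (\prod_(k < b) (a - k%:Z)%:~R) / (b`!)%:R.

Variable V : lmodType C.

Definition lin (W : lmodType C) (f : V -> W) : Prop :=
  forall (a : C) (x y : V), f (a *: x + y) = a *: f x + f y.

Definition zsum (N : nat) (F : int -> V) : V :=
  \sum_(k < (2 * N).+1) F (k%:Z - N%:Z).

(* scalar part (pi_2) of v^{ab}(s,t) in A, w.r.t. the basis B u {1} *)
Definition scal (d : nat) (a b : 'I_d) (s t : int) : C :=
  if (a == b) && (s + t == 0) && (0 < s) then s%:~R else 0.

End Defs.

(* rho i j m n  is the action of v^{ij}(m,n) in L_r on a C-module W *)
Definition Lr_rel (C : fieldType) (d : nat) (r : C) (W : lmodType C)
  (rho : 'I_d -> 'I_d -> int -> int -> W -> W) : Prop :=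
  let rr a b s t (v : W) := rho a b s t v + ((r - 1) * scal C a b s t) *: v in
  [/\ (forall i j s t, lin (rho i j s t)),
      (forall i j s t v, ~~ ((i == j) && (s + t == 0)) ->
          rho i j s t v = rho j i t s v),
      (forall i s v, rho i i s (- s) v = rho i i (- s) s v + s%:~R *: v) &
      (forall i j k l m n p q v,
          rho i j m n (rho k l p q v) - rho k l p q (rho i j m n v) =
            (if (j == k) && (n + p == 0) then n%:~R *: rr i l m q v else 0)
          + (if (j == l) && (n + q == 0) then n%:~R *: rr i k m p v else 0)
          + (if (i == k) && (m + p == 0) then m%:~R *: rr l j q n v else 0)
          + (if (i == l) && (m + q == 0) then m%:~R *: rr k j p n v else 0))].

Definition Bplus_annih (C : fieldType) (d : nat) (W : lmodType C)
  (rho : 'I_d -> 'I_d -> int -> int -> W -> W) (w : W) : Prop :=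
  forall (i j : 'I_d) (s t : int),
    ((i < j)%N || ((i == j) && (s <= t))) -> ((0 <= s) || (0 <= t)) ->
    rho i j s t w = 0.

(* (V, rho, one) is the induced module M_r = U(L_r) (x)_{U(L_r^+)} C 1,
   characterized by its universal property *)
Definition is_Mr (C : fieldType) (d : nat) (r : C) (V : lmodType C)
  (rho : 'I_d -> 'I_d -> int -> int -> V -> V) (one : V) : Prop :=
  [/\ Lr_rel r rho, Bplus_annih rho one &
    forall (W : lmodType C) (sigma : 'I_d -> 'I_d -> int -> int -> W -> W)
           (w : W), Lr_rel r sigma -> Bplus_annih sigma w ->
      (exists f : V -> W, [/\ lin f, f one = w &
           forall i j s t v, f (rho i j s t v) = sigma i j s t (f v)])
      /\ (forall f g : V -> W,
           lin f -> f one = w -> (forall i j s t v, f (rho i j s t v) = sigma i j s t (f v)) ->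
           lin g -> g one = w -> (forall i j s t v, g (rho i j s t v) = sigma i j s t (g v)) ->
           forall v, f v = g v)].

(* w = L_r^{ij}(m) v  (the defining sum is finite on each vector:
   we require that its symmetric partial sums stabilize at w) *)
Definition Lval (C : fieldType) (d : nat) (V : lmodType C)
  (rho : 'I_d -> 'I_d -> int -> int -> V -> V) (i j : 'I_d) (m : int)
  (v w : V) : Prop :=
  exists N : nat, forall N' : nat, (N <= N')%N ->
    w = if (i != j) || (m != 0) then
          2%:R^-1 *: zsum N' (fun h => rho i j (m - h) h v)
        else
          2%:R^-1 *: rho i i 0 0 v
          + \sum_(1 <= h < N'.+1) rho i i (- (h%:Z)) h%:Z v.

(* Vertex operator algebra (V, Y, one, omega) of central charge c.
   Y a n b = a_(n) b, i.e. Y(a,z) b = sum_n (Y a n b) z^{-n-1}. *)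
Definition is_VOA (C : fieldType) (V : lmodType C) (Y : V -> int -> V -> V)
  (one omega : V) (c : C) : Prop :=
  let L (k : int) := Y omega (k + 1) in
  [/\ [/\
      (forall a n, lin (Y a n)) /\ (forall n b, lin (fun a => Y a n b)),
      (forall a b, exists N : int, forall n, N <= n -> Y a n b = 0),
      (forall n b, Y one n b = if n == -1 then b else 0) /\
      (forall a, Y a (-1) one = a /\ forall n, 0 <= n -> Y a n one = 0) &
      (* Jacobi identity, in Borcherds form *)
      (forall a b v (p q n : int), exists K0 : nat, forall K : nat, (K0 <= K)%N ->
         \sum_(k < K) binz C p k *: Y (Y a (n + k%:Z) b) (p + q - k%:Z) v =
         \sum_(k < K) ((-1) ^+ k * binz C n k) *:
             (Y a (p + n - k%:Z) (Y b (q + k%:Z) v)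
              - (-1) ^ n *: Y b (q + n - k%:Z) (Y a (p + k%:Z) v)))],
      (forall (m n : int) v,
         L m (L n v) - L n (L m v) =
           (m - n)%:~R *: L (m + n) v
           + (if m + n == 0 then ((m ^+ 3 - m)%:~R / 12%:R) * c else 0) *: v),
      (forall a (n : int) b, Y (L (-1) a) n b = - (n%:~R) *: Y a (n - 1) b) &
      (* Z-grading by L(0)-eigenvalues, finite-dimensional pieces,
         bounded below *)
      [/\ (forall v, exists s : seq (int * V),
             (forall x, x \in s -> L 0 x.2 = x.1%:~R *: x.2) /\
             v = \sum_(x <- s) x.2),
          (forall n : int, exists s : seq V, forall v,
             L 0 v = n%:~R *: v ->
             exists cf : nat -> C, v = \sum_(k < size s) cf k *: s`_k) &
          (exists N0 : int, forall n : int, n < N0 ->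
             forall v, L 0 v = n%:~R *: v -> v = 0)]].

(* Main.v *)
Require Import Defs.
From HB Require Import structures.
From mathcomp Require Import all_boot all_order all_algebra.
From mathcomp Require Import complex reals.
From mathcomp Require Import zify ring lra.
Import Order.TTheory GRing.Theory Num.Theory.
Local Open Scope ring_scope.

Section Helpers.
Variables (C : numFieldType) (V : lmodType C).

Lemma lin0 (W : lmodType C) (f : V -> W) : lin f -> f 0 = 0.
Proof.
move=> Hf; have := Hf (-1) 0 0.
by rewrite scaleN1r oppr0 addr0 scaleN1r addNr.
Qed.

Lemma linZ (W : lmodType C) (f : V -> W) a x : lin f -> f (a *: x) = a *: f x.
Proof. by move=> Hf; have := Hf a x 0; rewrite !addr0 lin0 // addr0. Qed.

Lemma linD (W : lmodType C) (f : V -> W) x y : lin f -> f (x + y) = f x + f y.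
Proof. by move=> Hf; have := Hf 1 x y; rewrite !scale1r. Qed.

Lemma linN (W : lmodType C) (f : V -> W) x : lin f -> f (- x) = - f x.
Proof. by move=> Hf; rewrite -scaleN1r linZ // scaleN1r. Qed.

Lemma linB (W : lmodType C) (f : V -> W) x y : lin f -> f (x - y) = f x - f y.
Proof. by move=> Hf; rewrite linD // linN. Qed.

Lemma lin_zsum (W : lmodType C) (f : V -> W) N F : lin f ->
  f (zsum N F) = zsum N (fun k => f (F k)).
Proof.
move=> Hf; rewrite /zsum.
elim/big_rec2: _ => [|k y1 y2 _ <-]; first exact: lin0.
exact: linD.
Qed.

Lemma lin_sum (W : lmodType C) (f : V -> W) (I : Type) (rr : seq I) (P : pred I) (F : I -> V) :
  lin f -> f (\sum_(k <- rr | P k) F k) = \sum_(k <- rr | P k) f (F k).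
Proof.
move=> Hf; elim/big_rec2: _ => [|k y1 y2 _ <-]; first exact: lin0.
exact: linD.
Qed.

Lemma zsum_ext N (F G : int -> V) : (forall k, F k = G k) -> zsum N F = zsum N G.
Proof. by move=> H; apply: eq_bigr => k _; apply: H. Qed.

Lemma zsumD N (F G : int -> V) : zsum N (fun k => F k + G k) = zsum N F + zsum N G.
Proof. by rewrite /zsum big_split. Qed.

Lemma zsumB N (F G : int -> V) : zsum N (fun k => F k - G k) = zsum N F - zsum N G.
Proof. by rewrite /zsum sumrB. Qed.

Lemma zsumZ N a (F : int -> V) : zsum N (fun k => a *: F k) = a *: zsum N F.
Proof. by rewrite /zsum scaler_sumr. Qed.

Lemma zsumE N (F : int -> V) :
  zsum N F = \sum_(0 <= k < (2 * N).+1) F (k%:Z - N%:Z).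
Proof. by rewrite /zsum big_mkord. Qed.

Lemma zsumS N (F : int -> V) :
  zsum N.+1 F = zsum N F + F (N.+1)%:Z + F (- (N.+1)%:Z).
Proof.
rewrite !zsumE.
have -> : (2 * N.+1).+1 = ((2 * N).+1).+2 by rewrite mulnS.
rewrite big_nat_recr //= big_nat_recl //=.
rewrite [F (0%:Z - _) + _]addrC -addrA [F (0%:Z - _) + _]addrC addrA.
congr (_ + _ + _).
- by apply: eq_bigr => k _; congr F; lia.
- by congr F; lia.
- by congr F; lia.
Qed.

Lemma zsum_shift N (G : int -> V) :
  zsum N (fun k => G (k - 1)) = zsum N G - G N%:Z + G (- N%:Z - 1).
Proof.
rewrite !zsumE [LHS]big_nat_recl // [in RHS]big_nat_recr //=.
have -> : \sum_(0 <= i < 2 * N) G ((i.+1)%:Z - N%:Z - 1) =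
          \sum_(0 <= i < 2 * N) G (i%:Z - N%:Z).
  by apply: eq_bigr => k _; congr G; lia.
have -> : G ((2 * N)%:Z - N%:Z) = G N%:Z by congr G; lia.
have -> : G (0%:Z - N%:Z - 1) = G (- N%:Z - 1) by congr G; lia.
rewrite addrK addrC; congr (_ + _); congr G; lia.
Qed.

Lemma zsum_delta N (c : int) (X : V) : - N%:Z <= c <= N%:Z ->
  zsum N (fun h => if h == c then X else 0) = X.
Proof.
move=> /andP [h1 h2].
have Hk : (absz (c + N%:Z)%R < (2 * N).+1)%N by lia.
rewrite /zsum (bigD1 (Ordinal Hk)) //= big1 ?addr0.
  by have -> : (absz (c + N%:Z)%R)%:Z - N%:Z == c by apply/eqP; lia.
move=> k /eqP Hne.
case: eqP => // Heq; exfalso; apply: Hne; apply: val_inj => /=; lia.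
Qed.

Lemma half_double (X : V) : 2%:R^-1 *: (X + X) = X.
Proof.
by rewrite -mulr2n -scaler_nat scalerA mulVf ?scale1r // pnatr_eq0.
Qed.

Lemma binz0 (x : int) : binz C x 0 = 1.
Proof. by rewrite /binz big_ord0 divr1. Qed.

Lemma binzS (x : int) n : binz C x n.+1 = binz C x n * (x - n%:Z)%:~R / (n.+1)%:R.
Proof.
rewrite /binz big_ord_recr /= factS natrM.
by rewrite invfM; ring.
Qed.

Lemma binz_0 n : binz C 0 n.+1 = 0.
Proof. by rewrite /binz big_ord_recl /= subrr mul0r mul0r. Qed.

End Helpers.
Arguments linZ {C V W f} a x. Arguments lin_zsum {C V W f} N F.
Arguments lin0 {C V W f}. Arguments linD {C V W f} x y. Arguments linN {C V W f} x.

Section Rho.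
Variables (C : numFieldType) (d : nat) (r : C) (V : lmodType C)
  (rho : 'I_d -> 'I_d -> int -> int -> V -> V).

Lemma rho_lin (Hrel : Lr_rel r rho) i j s t : lin (rho i j s t).
Proof. by case: Hrel. Qed.

Lemma rho_sym (Hrel : Lr_rel r rho) (i j : 'I_d) s t x : i != j ->
  rho i j s t x = rho j i t s x.
Proof. by case: Hrel => _ H _ _ ij; apply: H; rewrite (negbTE ij). Qed.

Lemma comm_rho (Hrel : Lr_rel r rho) (i j : 'I_d) M N s t x : i != j ->
  rho i i M N (rho i j s t x) - rho i j s t (rho i i M N x) =
  (if N + s == 0 then N%:~R *: rho i j M t x else 0) +
  (if M + s == 0 then M%:~R *: rho i j N t x else 0).
Proof.
move=> ij; have Hs := rho_sym Hrel.
case: Hrel => Hlin _ _ Hlie.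
have ji : (j == i) = false by rewrite eq_sym (negbTE ij).
rewrite Hlie /= eqxx (negbTE ij) /= /scal (negbTE ij) ji /= !mulr0 !scale0r !addr0.
by rewrite (Hs j i) // ji.
Qed.


Lemma commD (Hrel : Lr_rel r rho) (D : V -> V) (i j : 'I_d) (ij : i != j)
  (HD : forall x, Lval rho i i (-1) x (D x)) s t x :
  D (rho i j s t x) - rho i j s t (D x) = (-s)%:~R *: rho i j (s - 1) t x.
Proof.
have [N1 H1] := HD (rho i j s t x).
have [N2 H2] := HD x.
pose N := maxn (maxn N1 N2) (absz s).+1.
rewrite (H1 N) ?(H2 N) /N; try lia.
rewrite eqxx /=.
rewrite (linZ _ _ (rho_lin Hrel i j s t)) (lin_zsum _ _ (rho_lin Hrel i j s t)).
rewrite -scalerBr -zsumB.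
set X := (-s)%:~R *: rho i j (s - 1) t x.
rewrite (@zsum_ext _ _ _ _ (fun h => (if h == -s then X else 0) + (if h == s - 1 then X else 0))).
  by rewrite zsumD !zsum_delta ?half_double //; apply/andP; split; lia.
move=> h; rewrite comm_rho // addr_eq0.
have -> : (-1 - h + s == 0) = (h == s - 1) by apply/idP/idP => /eqP ?; apply/eqP; lia.
case: eqP => [e1|_]; case: eqP => [e2|_] //; rewrite ?addr0 ?add0r.
- lia.
- by rewrite /X (_ : -1 - h = s - 1) ?e1 //; lia.
- by rewrite /X (_ : -1 - h = - s) ?e2 //; lia.
Qed.

Lemma commE (Hrel : Lr_rel r rho) (E : V -> V) (i j : 'I_d) (ij : i != j)
  (HE : forall x, Lval rho i i 0 x (E x)) s t x :
  E (rho i j s t x) - rho i j s t (E x) = (-s)%:~R *: rho i j s t x.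
Proof.
have [N1 H1] := HE (rho i j s t x).
have [N2 H2] := HE x.
pose N := maxn (maxn N1 N2) (absz s).
rewrite (H1 N) ?(H2 N) /N; try lia.
rewrite eqxx /=.
have Hl := rho_lin Hrel i j s t.
rewrite (linD _ _ Hl) (linZ _ _ Hl) (lin_sum _ _ _ _ _ _ _ _ Hl).
rewrite opprD addrACA -scalerBr comm_rho // !mulr0z !scale0r !if_same addr0 scaler0 add0r.
rewrite -sumrB.
set X := (-s)%:~R *: rho i j s t x.
rewrite (@eq_big_nat _ _ _ _ _ _ (fun h => if (h == absz s)%N then X else 0)).
  rewrite -big_mkcond big_nat1_eq.
  case: ifP => // /negbT hh; rewrite /X; have -> : s = 0 by lia.
  by rewrite oppr0 mulr0z scale0r.
move=> h hr; rewrite comm_rho //.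
do 3 (case: eqP => ?); rewrite ?addr0 ?add0r; try done; try (exfalso; lia).
- by rewrite /X (_ : h%:Z = - s) ?opprK //; lia.
- by rewrite /X (_ : h%:Z = s) //; lia.
Qed.

Lemma stab (i j : 'I_d) (ij : i != j) S w y :
  Lval rho i j S y w ->
  exists N0, forall n, (N0 <= n)%N ->
    rho i j (S - (n.+1)%:Z) (n.+1)%:Z y + rho i j (S - - (n.+1)%:Z) (- (n.+1)%:Z) y = 0.
Proof.
move=> [N1 H1]; exists N1 => n hn.
have := H1 n hn; have := H1 n.+1 (leqW hn); rewrite ij /= => ->.
move/(scalerI (invr_neq0 _)) => /(_ _); rewrite pnatr_eq0 => /(_ isT).
rewrite zsumS => /eqP; rewrite -addrA -subr_eq0 addrAC subrr add0r => /eqP //.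
Qed.

Lemma fin (Hrel : Lr_rel r rho) (E : V -> V) (i j : 'I_d) (ij : i != j)
  (HElin : lin E)
  (HE : forall x, Lval rho i i 0 x (E x))
  (HL : forall S x, exists w, Lval rho i j S x w) S x :
  exists N, forall k : int, (N <= absz k)%N -> rho i j (S - k) k x = 0.
Proof.
have [w1 Hw1] := HL S x; have [N1 S1] := stab i j ij _ _ _ Hw1.
have [w2 Hw2] := HL S (E x); have [N2 S2] := stab i j ij _ _ _ Hw2.
have key : forall hh, rho i j (S - hh) hh (E x) =
    E (rho i j (S - hh) hh x) + (S - hh)%:~R *: rho i j (S - hh) hh x.
  move=> hh; have H := commE Hrel E i j ij HE (S - hh) hh x.
  have H2 : rho i j (S - hh) hh (E x) =
     E (rho i j (S - hh) hh x) - (E (rho i j (S - hh) hh x) - rho i j (S - hh) hh (E x)).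
    by rewrite opprB (addrC (E _)) subrK.
  by rewrite {1}H2 H mulrNz scaleNr opprK.
exists (maxn N1 N2).+1 => k hk.
pose n := (absz k).-1.
have e1 := S1 n ltac:(rewrite /n; lia).
have e2 := S2 n ltac:(rewrite /n; lia).
set a := rho i j (S - (n.+1)%:Z) (n.+1)%:Z x in e1.
have ea : rho i j (S - - (n.+1)%:Z) (- (n.+1)%:Z) x = - a.
  by apply/eqP; rewrite -addr_eq0 addrC e1.
move: e2; rewrite !key ea (linN _ HElin) scalerN.
rewrite addrACA addrN add0r -/a -scalerBl -rmorphB /= => /eqP.
rewrite scaler_eq0 intr_eq0 => /orP [/eqP ?|/eqP a0]; first lia.
case: (ltP k 0) => hk0.
  have -> : k = - (n.+1)%:Z by rewrite /n; lia.
  by rewrite ea a0 oppr0.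
have -> : k = (n.+1)%:Z by rewrite /n; lia.
by rewrite -/a a0.
Qed.

Lemma bplus0 (Hrel : Lr_rel r rho) (one : V) (Hb : Bplus_annih rho one)
  (i j : 'I_d) (ij : i != j) s t : (0 <= s) || (0 <= t) -> rho i j s t one = 0.
Proof.
move=> hst; case: (ltngtP i j) => h.
- by apply: Hb; rewrite ?h.
- by rewrite rho_sym // Hb // ?h ?orbT // orbC.
- by move: ij; rewrite (val_inj h) eqxx.
Qed.

Lemma Done (Hrel : Lr_rel r rho) (one : V) (Hb : Bplus_annih rho one)
  (i : 'I_d) w (Hw : Lval rho i i (-1) one w) : w = 0.
Proof.
have [N H] := Hw; rewrite (H N) // eqxx /=.
rewrite (@zsum_ext _ _ _ _ (fun _ => 0)) ?/zsum ?big1 ?scaler0 // => h.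
case: (lerP 0 h) => h0.
  by apply: Hb; rewrite ?eqxx ?ltnn /=; [lia | rewrite h0 orbT].
case: Hrel => _ Hs _ _; rewrite Hs; last by rewrite eqxx /=; apply/eqP; lia.
have h1 : h <= -1 - h by lia. have h2 : 0 <= -1 - h by lia.
by apply: Hb; rewrite ?eqxx ?ltnn /= ?h1 ?h2 ?orbT.
Qed.

Lemma u00 (Hrel : Lr_rel r rho) (one : V) (Hb : Bplus_annih rho one)
  (i j : 'I_d) (ij : i != j) w (Hw : Lval rho i j (-2) one w) :
  rho i j (-1) (-1) one = 2%:R *: w.
Proof.
have [N H] := Hw; rewrite (H N.+1) // ij /=.
rewrite (@zsum_ext _ _ _ _ (fun h => if h == -1 then rho i j (-1) (-1) one else 0)).
  rewrite zsum_delta ?scalerA ?mulfV ?scale1r ?pnatr_eq0 //; apply/andP; split; lia.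
move=> h; case: eqP => [->//|hne].
apply: bplus0 => //; apply/orP; lia.
Qed.

End Rho.
Arguments rho_lin {C d r V rho}. Arguments rho_sym {C d r V rho}.
Arguments comm_rho {C d r V rho}. Arguments commD {C d r V rho}.
Arguments commE {C d r V rho}. Arguments stab {C d V rho}.
Arguments fin {C d r V rho}. Arguments bplus0 {C d r V rho}.
Arguments Done {C d r V rho}. Arguments u00 {C d r V rho}.

Lemma Ycomm (C : numFieldType) (V : lmodType C) (Y : V -> int -> V -> V) one om c :
  is_VOA Y one om c -> forall a b q w, Y (Y a 0 b) q w = Y a 0 (Y b q w) - Y b q (Y a 0 w).
Proof.
case=> [[_ _ _ HJ] _ _ _] a b q w.
have [K0 HK] := HJ a b w 0 q 0.
have := HK (maxn K0 1) (leq_maxl _ _).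
have -> : maxn K0 1 = (maxn K0 1).-1.+1 by lia.
rewrite !big_ord_recl /= !big1 ?addr0; first last.
- by move=> k _; rewrite (_ : bump 0 k = k.+1) // binz_0 scale0r.
- by move=> k _; rewrite (_ : bump 0 k = k.+1) // binz_0 mulr0 scale0r.
by rewrite binz0 expr0 mul1r !scale1r add0r.
Qed.


Local Open Scope complex_scope.

Theorem lemma3p5 (R : realType) (d : nat) (r : R[i]) (V : lmodType R[i])
  (rho : 'I_d -> 'I_d -> int -> int -> V -> V) (one : V)
  (omega : 'I_d -> 'I_d -> V) (Y : V -> int -> V -> V) :
  (2 <= d)%N ->
  is_Mr r rho one ->
  (forall i j, Lval rho i j (-2) one (omega i j)) ->
  is_VOA Y one (\sum_(i < d) omega i i) (d%:R * r) ->
  (forall i j (m : int) v, Lval rho i j m v (Y (omega i j) (m + 1) v)) ->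
  (forall n v, Y one n v = if n == -1 then v else 0) ->
  forall (i j : 'I_d) (m n : int), i != j -> m < 0 -> n < 0 ->
  forall (l : int) (v : V),
    exists N : nat, forall N' : nat, (N <= N')%N ->
      Y (rho i j m n one) l v =
        (-1) ^ (- m - n) *:
          zsum N' (fun k => (binz R[i] (l + n - k) `|- m - 1|%N
                             * binz R[i] (k - n - 1) `|- n - 1|%N)
                            *: rho i j (l + m + n + 1 - k) k v).
Proof.
move=> hd [Hrel Hb _] Hom HV HL Hone i j m n ij hm hn l v.
have HV' := HV.
case: HV' => [[[HYlin HYalin] _ _ _] _ _ _].
pose Di := Y (omega i i) 0. pose Dj := Y (omega j j) 0. pose E := Y (omega i i) 1.
have HDi : forall x, Lval rho i i (-1) x (Di x) := fun x => HL i i (-1) x.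
have HDj : forall x, Lval rho j j (-1) x (Dj x) := fun x => HL j j (-1) x.
have HE : forall x, Lval rho i i 0 x (E x) := fun x => HL i i 0 x.
have ji : j != i by rewrite eq_sym.
have Yl : forall x c q w, Y (c *: x) q w = c *: Y x q w :=
  fun x c q w => linZ c x (HYalin q w).
have Dlin : forall x, lin (Y x 0) := fun x => HYlin x 0.
have Bor := Ycomm _ _ _ _ _ _ HV.
have CDi : forall s t w, Di (rho i j s t w) - rho i j s t (Di w) =
    (-s)%:~R *: rho i j (s - 1) t w := commD Hrel Di i j ij HDi.
have CDj : forall s t w, Dj (rho i j s t w) - rho i j s t (Dj w) =
    (-t)%:~R *: rho i j s (t - 1) w.
  move=> s t w; rewrite !(rho_sym Hrel i j _ _ _ ij).
  exact: (commD Hrel Dj j i ji HDj t s w).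
have Di1 : Di one = 0 := Done Hrel one Hb i _ (HDi one).
have Dj1 : Dj one = 0 := Done Hrel one Hb j _ (HDj one).
have Ui : forall a b : nat, Di (rho i j (-1 - a%:Z) (-1 - b%:Z) one) =
    (a.+1)%:R *: rho i j (-1 - (a.+1)%:Z) (-1 - b%:Z) one.
  move=> a b; have := CDi (-1 - a%:Z) (-1 - b%:Z) one.
  rewrite Di1 (lin0 (rho_lin Hrel _ _ _ _)) subr0 => ->.
  have -> : -(-1 - a%:Z) = (a.+1)%:Z by lia.
  have -> : -1 - a%:Z - 1 = -1 - (a.+1)%:Z by lia.
  by rewrite -pmulrn.
have Uj : forall a b : nat, Dj (rho i j (-1 - a%:Z) (-1 - b%:Z) one) =
    (b.+1)%:R *: rho i j (-1 - a%:Z) (-1 - (b.+1)%:Z) one.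
  move=> a b; have := CDj (-1 - a%:Z) (-1 - b%:Z) one.
  rewrite Dj1 (lin0 (rho_lin Hrel _ _ _ _)) subr0 => ->.
  have -> : -(-1 - b%:Z) = (b.+1)%:Z by lia.
  have -> : -1 - b%:Z - 1 = -1 - (b.+1)%:Z by lia.
  by rewrite -pmulrn.
pose P (a b : nat) := forall q w, exists N, forall N', (N <= N')%N ->
  Y (rho i j (-1 - a%:Z) (-1 - b%:Z) one) q w = (-1) ^+ (a + b) *:
    zsum N' (fun k => (binz R[i] (q - 1 - b%:Z - k) a * binz R[i] (k + b%:Z) b)
                        *: rho i j (q - 1 - a%:Z - b%:Z - k) k w).
have P00 : P 0%N 0%N.
  move=> q w; have [N H] := HL i j (q - 1) w; exists N => N' hN.
  have e : -1 - (0%N)%:Z = -1 by [].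
  rewrite e (u00 Hrel one Hb i j ij _ (Hom i j)) Yl.
  have := H N' hN; rewrite subrK ij /= => ->.
  rewrite scalerA mulfV ?pnatr_eq0 // scale1r expr0 scale1r.
  apply: zsum_ext => k; rewrite !binz0 mulr1 scale1r.
  by congr (rho _ _ _ _ _); lia.
have SA : forall a b, P a b -> P a.+1 b.
  move=> a b IH q w.
  have [N1 H1] := IH q w; have [N2 H2] := IH q (Di w).
  exists (maxn N1 N2) => N' hN.
  have hu : rho i j (-1 - (a.+1)%:Z) (-1 - b%:Z) one =
      (a.+1)%:R^-1 *: Di (rho i j (-1 - a%:Z) (-1 - b%:Z) one).
    by rewrite Ui scalerA mulVf ?scale1r // pnatr_eq0.
  rewrite hu Yl Bor (H1 N') ?(H2 N'); try lia.
  rewrite (linZ _ _ (Dlin _)) (lin_zsum _ _ (Dlin _)) -scalerBr -zsumB.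
  rewrite -!zsumZ; apply: zsum_ext => k.
  rewrite (linZ _ _ (Dlin _)) -scalerBr CDi !scalerA.
  have -> : q - 1 - a%:Z - b%:Z - k - 1 = q - 1 - (a.+1)%:Z - b%:Z - k by lia.
  congr (_ *: _).
  rewrite binzS addSn exprS.
  have -> : -(q - 1 - a%:Z - b%:Z - k) = - (q - 1 - b%:Z - k - a%:Z) by lia.
  by rewrite mulrNz; field; rewrite -mulrS pnatr_eq0.
have HL' : forall S x, exists w, Lval rho i j S x w :=
  fun S x => ex_intro _ _ (HL i j S x).
have SB : forall a b, P a b -> P a b.+1.
  move=> a b IH q w.
  have [N1 H1] := IH q w; have [N2 H2] := IH q (Dj w).
  pose T := q - 1 - a%:Z - (b.+1)%:Z.
  have [N3 H3] := fin Hrel E i j ij (HYlin _ 1) HE HL' T w.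
  exists (maxn (maxn N1 N2) N3) => N' hN.
  have hu : rho i j (-1 - a%:Z) (-1 - (b.+1)%:Z) one =
      (b.+1)%:R^-1 *: Dj (rho i j (-1 - a%:Z) (-1 - b%:Z) one).
    by rewrite Uj scalerA mulVf ?scale1r // pnatr_eq0.
  rewrite hu Yl Bor (H1 N') ?(H2 N'); try lia.
  rewrite (linZ _ _ (Dlin _)) (lin_zsum _ _ (Dlin _)) -scalerBr -zsumB.
  pose g := fun k' : int => ((b.+1)%:R^-1 * ((-1) ^+ (a + b) *
     ((binz R[i] (q - 1 - b%:Z - (k' + 1)) a * binz R[i] (k' + 1 + b%:Z) b)
       * (- (k' + 1))%:~R))) *: rho i j (T - k') k' w.
  rewrite scalerA -zsumZ.
  rewrite (@zsum_ext _ _ _ _ (fun k => g (k - 1))); last first.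
    move=> k; rewrite (linZ _ _ (Dlin _)) -scalerBr CDj !scalerA /g.
    have -> : k - 1 + 1 = k by lia.
    have -> : T - (k - 1) = q - 1 - a%:Z - b%:Z - k by rewrite /T; lia.
    by congr (_ *: _); rewrite !mulrA.
  rewrite zsum_shift.
  have g1 : g N'%:Z = 0 by rewrite /g H3 ?scaler0 //; lia.
  have g2 : g (- N'%:Z - 1) = 0 by rewrite /g H3 ?scaler0 //; lia.
  rewrite g1 g2 subr0 addr0 -zsumZ; apply: zsum_ext => k; rewrite /g scalerA.
  have -> : T - k = q - 1 - a%:Z - (b.+1)%:Z - k by [].
  congr (_ *: _).
  have -> : q - 1 - b%:Z - (k + 1) = q - 1 - (b.+1)%:Z - k by lia.
  have -> : k + (b.+1)%:Z = k + 1 + b%:Z by lia.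
  rewrite binzS.
  have -> : k + 1 + b%:Z - b%:Z = k + 1 by lia.
  by rewrite addnS exprS mulrNz; field; rewrite -mulrS pnatr_eq0.
have Pall : forall a b, P a b.
  move=> a b; elim: a b => [|a IHa] b; last exact: SA.
  by elim: b => [|b IHb]; [exact: P00 | exact: SB].
set a := `|- m - 1|%N; set b := `|- n - 1|%N.
have ma : m = -1 - a%:Z by rewrite /a; lia.
have nb : n = -1 - b%:Z by rewrite /b; lia.
have [N HN] := Pall a b l v; exists N => N' hN'.
rewrite {1}ma {1}nb (HN N' hN').
have e : - m - n = ((a + b).+2)%:Z by rewrite ma nb; lia.
rewrite e -exprnP !exprS !mulN1r opprK.
congr (_ *: _); apply: zsum_ext => k.
by congr (binz _ _ _ * binz _ _ _ *: rho _ _ _ _ _); lia.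
Qed.
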